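(* Let $(\mathbb{X},d)$ be a complete metric space, let $F=(\mathbb{X};f_1,\dots,f_N)$ be an iterated function system of continuous maps $f_i:\mathbb{X}\to\mathbb{X}$, and let $A$ be a point-fibred attractor of $F$ with coordinate map $\pi:[N]^\infty\to A$. With respect to $A$ and $F$ (and the notions of disjunctive, reversible, strongly reversible and full words defined in the context): \begin{enumerate} \item If $N\ge 2$, there are infinitely many disjunctive words in $[N]^\infty$. \item If $A^{o}\neq\emptyset$, then every disjunctive word is strongly reversible. \item Every strongly reversible word is reversible. \item A word $\theta\in[N]^\infty$ is reversible if and only if it is full. \end{enumerate}
   Context: $S^o$ denotes the interior of a set $S$. $\mathbb{H}(\mathbb{X})$ is the set of nonempty compact subsets of $\mathbb{X}$ with the Hausdorff metric, and $F(B)=\bigcup_i f_i(B)$, with $F^k$ its $k$-fold iterate. A nonempty compact $A$ is an attractor of $F$ if $F(A)=A$ and there is an open $U\supset A$ with $F^k(S)\to A$ in the Hausdorff metric for all $S\in\mathbb{H}(U)$; the basin $B(A)$ is the union of all such $U$. $[N]=\{1,\dots,N\}$, $[N]^\infty$ is the set of infinite words $\omega=\omega_1\omega_2\cdots$ with $\omega_i\in[N]$, $\omega|k=\omega_1\cdots\omega_k$, and $f_{\omega|k}=f_{\omega_1}\circ\cdots\circ f_{\omega_k}$. The attractor $A$ is point-fibred if for every $\omega\in[N]^\infty$ and every $C\in\mathbb{H}(\mathbb{X})$ with $C\subset B(A)$ the sequence $f_{\omega|k}(C)$ converges in $\mathbb{H}(\mathbb{X})$ to a singleton $\{\pi(\omega)\}$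 independent of $C$; this defines the coordinate map $\pi$, and any word in $\pi^{-1}(x)$ is an address of $x\in A$. A subword of a word is a string of consecutive letters. A word $\theta\in[N]^\infty$ is disjunctive if every finite word over $[N]$ is a subword of $\theta$. $\theta$ is reversible (w.r.t. $A,F$) if there is $\omega\in[N]^\infty$ with $\pi(\omega)\in A^o$ such that for all positive integers $M,L$ there is an integer $m\ge M$ with $\omega_1\omega_2\cdots\omega_L=\theta_{m+L}\theta_{m+L-1}\cdots\theta_{m+1}$. $\theta$ is strongly reversible if there is $\omega\in[N]^\infty$ with $\pi(\omega)\in A^o$ such that for every positive integer $M$ there is $m\ge M$ with $\omega_1\cdots\omega_m=\theta_m\theta_{m-1}\cdots\theta_1$. $\theta$ is full if there exists a nonempty compact set $A'\subset A^o$ such that for every positive integer $M$ there exist integers $n>m\ge M$ with $f_{\theta_n}\circ f_{\theta_{n-1}}\circ\cdots\circ f_{\theta_{m+1}}(A)\subset A'$. *)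

(* Defs.v *)
From Stdlib Require Import Reals List Arith.
Open Scope R_scope.

Section Defs.
Variable X : Type.
Variable d : X -> X -> R.

Definition is_metric : Prop :=
  (forall x y, 0 <= d x y) /\ (forall x y, d x y = 0 <-> x = y) /\
  (forall x y, d x y = d y x) /\ (forall x y z, d x z <= d x y + d y z).

Definition cauchy_seq (u : nat -> X) : Prop :=
  forall e, 0 < e -> exists K, forall m n, (K <= m)%nat -> (K <= n)%nat -> d (u m) (u n) < e.

Definition converges_to (u : nat -> X) (x : X) : Prop :=
  forall e, 0 < e -> exists K, forall n, (K <= n)%nat -> d (u n) x < e.

Definition complete_metric : Prop :=
  forall u, cauchy_seq u -> exists x, converges_to u x.

Definition subset (S T : X -> Prop) : Prop := forall x, S x -> T x.

Definition open_set (U : X -> Prop) : Prop :=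
  forall x, U x -> exists e, 0 < e /\ forall y, d x y < e -> U y.

Definition interior_set (S : X -> Prop) (x : X) : Prop :=
  exists U, open_set U /\ subset U S /\ U x.

Definition compact_set (K : X -> Prop) : Prop :=
  forall (I : Type) (U : I -> X -> Prop), (forall i, open_set (U i)) ->
    (forall x, K x -> exists i, U i x) ->
    exists l : list I, forall x, K x -> exists i, In i l /\ U i x.

Definition nonempty_set (S : X -> Prop) : Prop := exists x, S x.

Definition inH (S : X -> Prop) : Prop := nonempty_set S /\ compact_set S.

Definition continuous_map (g : X -> X) : Prop :=
  forall x e, 0 < e -> exists delta, 0 < delta /\
    forall y, d x y < delta -> d (g x) (g y) < e.

(* convergence S_k -> T in the Hausdorff metric, written out:
   h(S_k,T) -> 0 *)
Definition hconv (S : nat -> X -> Prop) (T : X -> Prop) : Prop :=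
  forall e, 0 < e -> exists K, forall k, (K <= k)%nat ->
    (forall x, S k x -> exists y, T y /\ d x y < e) /\
    (forall y, T y -> exists x, S k x /\ d x y < e).

Definition image_set (g : X -> X) (S : X -> Prop) (y : X) : Prop :=
  exists x, S x /\ y = g x.

Definition singleton (p : X) (y : X) : Prop := y = p.

Variable N : nat.
Variable f : nat -> X -> X.   (* maps f_0, ..., f_{N-1}  (paper's f_1..f_N) *)

Definition IFS_ok : Prop := forall i, (i < N)%nat -> continuous_map (f i).

Definition Fop (B : X -> Prop) (y : X) : Prop :=
  exists i, (i < N)%nat /\ image_set (f i) B y.

Fixpoint Fiter (k : nat) (B : X -> Prop) : X -> Prop :=
  match k with O => B | S k' => Fop (Fiter k' B) end.

Definition attracting_nbhd (A U : X -> Prop) : Prop :=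
  open_set U /\ subset A U /\
  forall S, inH S -> subset S U -> hconv (fun k => Fiter k S) A.

Definition attractor (A : X -> Prop) : Prop :=
  inH A /\ (forall y, Fop A y <-> A y) /\ exists U, attracting_nbhd A U.

Definition basin (A : X -> Prop) (x : X) : Prop :=
  exists U, attracting_nbhd A U /\ U x.

(* infinite words over the alphabet {0,...,N-1}; the paper's letter
   omega_j (j >= 1) is  omega (j-1). *)
Definition word (w : nat -> nat) : Prop := forall i, (w i < N)%nat.

Definition fcomp (l : list nat) : X -> X :=
  fold_right (fun i g => fun x => f i (g x)) (fun x => x) l.

Definition prefix (w : nat -> nat) (k : nat) : list nat := map w (seq 0 k).

Definition point_fibred (A : X -> Prop) : Prop :=
  forall w, word w -> exists p, forall C, inH C -> subset C (basin A) ->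
    hconv (fun k => image_set (fcomp (prefix w k)) C) (singleton p).

Definition coordinate_map (A : X -> Prop) (pi : (nat -> nat) -> X) : Prop :=
  forall w, word w -> forall C, inH C -> subset C (basin A) ->
    hconv (fun k => image_set (fcomp (prefix w k)) C) (singleton (pi w)).

Definition disjunctive (th : nat -> nat) : Prop :=
  forall l : list nat, (forall a, In a l -> (a < N)%nat) ->
    exists k, forall i, (i < length l)%nat -> th (k + i)%nat = nth i l O.

(* omega_1...omega_L = theta_{m+L} ... theta_{m+1} *)
Definition reversible (A : X -> Prop) (pi : (nat -> nat) -> X) (th : nat -> nat) : Prop :=
  exists w, word w /\ interior_set A (pi w) /\
    forall M L, (1 <= M)%nat -> (1 <= L)%nat ->
      exists m, (M <= m)%nat /\
        forall i, (i < L)%nat -> w i = th (m + L - 1 - i)%nat.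

(* omega_1...omega_m = theta_m ... theta_1 *)
Definition strongly_reversible (A : X -> Prop) (pi : (nat -> nat) -> X) (th : nat -> nat) : Prop :=
  exists w, word w /\ interior_set A (pi w) /\
    forall M, (1 <= M)%nat ->
      exists m, (M <= m)%nat /\
        forall i, (i < m)%nat -> w i = th (m - 1 - i)%nat.

(* f_{theta_n} o ... o f_{theta_{m+1}} (A) subset A' *)
Definition full (A : X -> Prop) (th : nat -> nat) : Prop :=
  exists A', inH A' /\ subset A' (interior_set A) /\
    forall M, (1 <= M)%nat ->
      exists m n, (M <= m)%nat /\ (m < n)%nat /\
        subset (image_set (fcomp (rev (map th (seq m (n - m))))) A) A'.

End Defs.

(* Main.v *)
Require Import Defs.
From Stdlib Require Import Reals List Arith Lia Lra ClassicalEpsilon Classical.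
Open Scope R_scope.

Lemma nth_prefix (w : nat -> nat) k i : (i < k)%nat -> nth i (prefix w k) 0%nat = w i.
Proof.
  intro H. unfold prefix.
  rewrite (nth_indep _ _ (w 0%nat)) by (rewrite length_map, length_seq; lia).
  rewrite map_nth, seq_nth by lia. reflexivity.
Qed.

Lemma length_prefix w k : length (prefix w k) = k.
Proof. unfold prefix. rewrite length_map, length_seq. reflexivity. Qed.

Lemma prefix_S w k : prefix w (S k) = prefix w k ++ (w k :: nil).
Proof. unfold prefix. rewrite seq_S, map_app. reflexivity. Qed.

Lemma prefix_ext w w' k : (forall i, (i < k)%nat -> w i = w' i) -> prefix w k = prefix w' k.
Proof.
  intro H. unfold prefix. apply map_ext_in. intros a Ha. apply in_seq in Ha. apply H. lia.
Qed.

Lemma prefix_eq_inv w w' k : prefix w k = prefix w' k -> forall i, (i < k)%nat -> w i = w' i.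
Proof.
  intros H i Hi. rewrite <- (nth_prefix w k i Hi), <- (nth_prefix w' k i Hi), H. reflexivity.
Qed.

Lemma prefix_split w k r : prefix w (k + r) = prefix w k ++ map w (seq k r).
Proof. unfold prefix. rewrite seq_app, map_app. reflexivity. Qed.

Fixpoint words (N n : nat) : list (list nat) :=
  match n with
  | O => nil :: nil
  | S n' => flat_map (fun a => map (cons a) (words N n')) (seq 0 N)
  end.

Lemma words_complete N l : (forall a, In a l -> (a < N)%nat) -> In l (words N (length l)).
Proof.
  induction l as [|a l IH]; intro H; simpl. auto.
  apply in_flat_map. exists a. split.
  - apply in_seq. specialize (H a (or_introl eq_refl)). lia.
  - apply in_map. apply IH. intros b Hb. apply H. right; exact Hb.
Qed.

Lemma words_bound N n l a : In l (words N n) -> In a l -> (a < N)%nat.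
Proof.
  revert l. induction n as [|n IH]; intros l Hl Ha; simpl in Hl.
  - destruct Hl as [<-|[]]. destruct Ha.
  - apply in_flat_map in Hl. destruct Hl as [b [Hb Hl]]. apply in_map_iff in Hl.
    destruct Hl as [l' [<- Hl']]. destruct Ha as [<-|Ha].
    + apply in_seq in Hb. lia.
    + eapply IH; eauto.
Qed.

Definition block N n := concat (words N n) ++ (0%nat :: nil).

Fixpoint flat N n : list nat :=
  match n with O => nil | S n' => flat N n' ++ block N n' end.

Definition Dw N (p : nat) : nat := nth p (flat N (S p)) 0%nat.

Lemma flat_len N n : (n <= length (flat N n))%nat.
Proof.
  induction n; simpl. lia. rewrite length_app. unfold block. rewrite length_app. simpl. lia.
Qed.

Lemma flat_mono N n m : (n <= m)%nat -> exists r, flat N m = flat N n ++ r.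
Proof.
  induction 1. exists nil. rewrite app_nil_r. auto.
  destruct IHle as [r Hr]. exists (r ++ block N m). simpl. rewrite Hr, app_assoc. auto.
Qed.

Lemma Dw_flat N n p : (p < length (flat N n))%nat -> Dw N p = nth p (flat N n) 0%nat.
Proof.
  intro H. unfold Dw.
  destruct (flat_mono N n (Nat.max n (S p))) as [r1 H1]. lia.
  destruct (flat_mono N (S p) (Nat.max n (S p))) as [r2 H2]. lia.
  assert (Hp : (p < length (flat N (S p)))%nat) by (pose proof (flat_len N (S p)); lia).
  rewrite <- (app_nth1 _ r2 _ Hp), <- H2, H1, app_nth1 by exact H. reflexivity.
Qed.

Lemma flat_bound N n a : (0 < N)%nat -> In a (flat N n) -> (a < N)%nat.
Proof.
  intro HN. induction n; simpl. tauto.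
  intro Ha. apply in_app_or in Ha. destruct Ha as [Ha|Ha]. auto.
  unfold block in Ha. apply in_app_or in Ha. destruct Ha as [Ha|[<-|[]]]; [|lia].
  apply in_concat in Ha. destruct Ha as [l [Hl Ha]]. eapply words_bound; eauto.
Qed.

Lemma Dw_word N : (0 < N)%nat -> word N (Dw N).
Proof.
  intros HN p. unfold Dw. destruct (Nat.lt_ge_cases p (length (flat N (S p)))).
  - eapply flat_bound; eauto. apply nth_In; auto.
  - rewrite nth_overflow by lia. auto.
Qed.

Lemma Dw_disj N : disjunctive N (Dw N).
Proof.
  intros l Hl. apply words_complete in Hl. apply in_split in Hl.
  destruct Hl as [ws1 [ws2 E]].
  exists (length (flat N (length l)) + length (concat ws1))%nat.
  intros i Hi.
  assert (Hb : flat N (S (length l)) = flat N (length l) ++ concat ws1 ++ l ++ concat ws2 ++ (0%nat::nil)).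
  { simpl. unfold block. rewrite E, concat_app. simpl. rewrite !app_assoc. reflexivity. }
  rewrite (Dw_flat N (S (length l))).
  - rewrite Hb, app_nth2 by lia. rewrite app_nth2 by lia. rewrite app_nth1 by lia.
    f_equal. lia.
  - rewrite Hb, !length_app. lia.
Qed.

Definition diag (L : list (nat -> nat)) (D : nat -> nat) (i : nat) : nat :=
  if Nat.ltb i (length L) then (if Nat.eqb (nth i L (fun _ => 0%nat) i) 0 then 1%nat else 0%nat)
  else D (i - length L)%nat.

Lemma part1 N : (2 <= N)%nat -> forall l : list (nat -> nat),
      exists th, word N th /\ disjunctive N th /\ ~ In th l.
Proof.
  intros HN L. exists (diag L (Dw N)). split; [|split].
  - intro i. unfold diag. destruct (Nat.ltb_spec i (length L)).
    + destruct (Nat.eqb _ 0); lia.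
    + apply Dw_word. lia.
  - intros l Hl. destruct (Dw_disj N l Hl) as [k Hk]. exists (length L + k)%nat.
    intros i Hi. unfold diag. destruct (Nat.ltb_spec (length L + k + i) (length L)). lia.
    rewrite <- Hk by auto. f_equal. lia.
  - intro Hin. destruct (In_nth L _ (fun _ => 0%nat) Hin) as [n [Hn E]].
    assert (H1 := f_equal (fun g => g n) E). simpl in H1. unfold diag in H1.
    destruct (Nat.ltb_spec n (length L)); [|lia].
    destruct (Nat.eqb_spec (nth n L (fun _ => 0%nat) n) 0); lia.
Qed.

Lemma fcomp_app X (f : nat -> X -> X) l1 l2 x :
  fcomp X f (l1 ++ l2) x = fcomp X f l1 (fcomp X f l2 x).
Proof.
  induction l1 as [|a l1 IH]; simpl. reflexivity. rewrite IH. reflexivity.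
Qed.

Lemma fcomp_inv X N (f : nat -> X -> X) (A : X -> Prop) l x :
  (forall y, Fop X N f A y -> A y) -> (forall a, In a l -> (a < N)%nat) ->
  A x -> A (fcomp X f l x).
Proof.
  intros HF. induction l as [|a l IH]; intros Hl Hx; simpl. auto.
  apply HF. exists a. split. apply Hl; left; auto.
  exists (fcomp X f l x). split; auto. apply IH; auto. intros b Hb; apply Hl; right; auto.
Qed.

Lemma map_seq_bound N (w : nat -> nat) k r : word N w -> forall a, In a (map w (seq k r)) -> (a < N)%nat.
Proof. intros Hw a Ha. apply in_map_iff in Ha. destruct Ha as [b [<- _]]. apply Hw. Qed.

Lemma fcomp_cont X d N f l : IFS_ok X d N f -> (forall a, In a l -> (a < N)%nat) ->
  continuous_map X d (fcomp X f l).
Proof.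
  intros Hifs. induction l as [|a l IH]; intros Hl; simpl.
  - intros x e He. exists e. split; auto.
  - intros x e He.
    destruct (Hifs a (Hl a (or_introl eq_refl)) (fcomp X f l x) e He) as [e1 [He1 H1]].
    destruct (IH (fun b Hb => Hl b (or_intror Hb)) x e1 He1) as [dl [Hdl H2]].
    exists dl. split; auto.
Qed.

Lemma compact_image X d g K : continuous_map X d g -> compact_set X d K ->
  compact_set X d (image_set X g K).
Proof.
  intros Hg HK I U HU Hcov.
  destruct (HK I (fun i x => U i (g x))) as [l Hl].
  - intros i x Hx. destruct (HU i (g x) Hx) as [e [He H1]].
    destruct (Hg x e He) as [dl [Hdl H2]]. exists dl. split; auto.
  - intros x Hx. apply Hcov. exists x. auto.
  - exists l. intros y [x [Hx ->]]. apply Hl; auto.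
Qed.

Lemma list_bound (l : list nat) : exists n, forall i, In i l -> (i <= n)%nat.
Proof.
  induction l as [|a l [n Hn]]. exists 0%nat. intros i [].
  exists (Nat.max a n). intros i [<-|Hi]. lia. specialize (Hn i Hi). lia.
Qed.

Lemma compact_closed X d K x : is_metric X d -> compact_set X d K ->
  (forall e, 0 < e -> exists p, K p /\ d p x < e) -> K x.
Proof.
  intros [Hpos [Hz [Hsym Htri]]] HK Hcl. apply NNPP. intro Hnx.
  destruct (HK nat (fun n y => / INR (S n) < d y x)) as [l Hl].
  - intros n y Hy. exists (d y x - / INR (S n)). split. lra.
    intros z Hz'. specialize (Htri y z x). lra.
  - intros y Hy. assert (Hyx : 0 < d y x).
    { destruct (Hpos y x) as [H|H]; auto. exfalso. apply Hnx.
      assert (y = x) by (apply Hz; auto). subst; auto. }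
    destruct (archimed_cor1 _ Hyx) as [n [Hn Hn0]]. exists (n - 1)%nat.
    replace (S (n - 1)) with n by lia. auto.
  - destruct (list_bound l) as [n0 Hn0].
    assert (He : 0 < / INR (S n0)) by (apply Rinv_0_lt_compat, lt_0_INR; lia).
    destruct (Hcl _ He) as [p [Hp Hpx]].
    destruct (Hl p Hp) as [i [Hi Hpi]].
    assert (/ INR (S n0) <= / INR (S i)).
    { apply Rinv_le_contravar. apply lt_0_INR; lia. apply le_INR. specialize (Hn0 i Hi). lia. }
    lra.
Qed.

Lemma pi_close X d N f A pi w :
  attractor X d N f A -> coordinate_map X d N f A pi -> word N w ->
  forall e, 0 < e -> exists K, forall k, (K <= k)%nat -> forall x, A x ->
    d (fcomp X f (prefix w k) x) (pi w) < e.
Proof.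
  intros [HA [HF [U [HUo [HAU HUc]]]]] Hc Hw e He.
  assert (Hb : subset X A (basin X d N f A)).
  { intros x Hx. exists U. split; [split; [|split]|]; auto. }
  destruct (Hc w Hw A HA Hb e He) as [K HK]. exists K. intros k Hk x Hx.
  destruct (HK k Hk) as [H1 _]. destruct (H1 (fcomp X f (prefix w k) x)) as [y [Hy Hd]].
  exists x; auto. unfold singleton in Hy. subst; auto.
Qed.

Lemma rev_seq_map (th : nat -> nat) m K :
  rev (map th (seq m K)) = prefix (fun i => th (m + K - 1 - i)%nat) K.
Proof.
  apply nth_ext with (d := 0%nat) (d' := 0%nat).
  - rewrite length_rev, length_map, length_seq, length_prefix. reflexivity.
  - intros n Hn. rewrite length_rev, length_map, length_seq in Hn.
    rewrite rev_nth by (rewrite length_map, length_seq; lia).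
    rewrite length_map, length_seq, nth_prefix by lia.
    rewrite (nth_indep _ _ (th 0%nat)) by (rewrite length_map, length_seq; lia).
    rewrite map_nth, seq_nth by lia. f_equal. lia.
Qed.

Lemma part3 X d N A pi th : strongly_reversible X d N A pi th -> reversible X d N A pi th.
Proof.
  intros [w [Hw [Hi H]]]. exists w. split; auto. split; auto.
  intros M L HM HL. destruct (H (M + L)%nat ltac:(lia)) as [m' [Hm' E]].
  exists (m' - L)%nat. split. lia. intros i Hil. rewrite E by lia. f_equal. lia.
Qed.

Lemma part4a X d N f A pi th : is_metric X d -> IFS_ok X d N f ->
  attractor X d N f A -> coordinate_map X d N f A pi ->
  reversible X d N A pi th -> full X d f A th.
Proof.
  intros Hm Hifs Hat Hc [w [Hw [[U [HUo [HUA HUw]]] Hr]]].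
  destruct Hm as [Hpos [Hz [Hsym Htri]]].
  destruct (HUo _ HUw) as [e [He Hball]].
  destruct (pi_close X d N f A pi w Hat Hc Hw e He) as [K0 HK0].
  set (K := Nat.max K0 1).
  destruct Hat as [[[a Ha] HAc] [HF _]].
  exists (image_set X (fcomp X f (prefix w K)) A). split; [split|split].
  - exists (fcomp X f (prefix w K) a). exists a. auto.
  - apply compact_image; auto. apply fcomp_cont with N; auto.
    unfold prefix. apply map_seq_bound; auto.
  - intros y [x [Hx ->]]. exists U. split; auto. split; auto.
    apply Hball. rewrite Hsym. apply HK0; auto. unfold K; lia.
  - intros M HM. destruct (Hr M K HM ltac:(unfold K; lia)) as [m [Hm E]].
    exists m, (m + K)%nat. split; auto. split. unfold K; lia.
    replace (m + K - m)%nat with K by lia. rewrite rev_seq_map.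
    rewrite (prefix_ext _ w K). intros y Hy; exact Hy.
    intros i Hi. rewrite E by auto. reflexivity.
Qed.

Lemma max_bound (P : nat -> nat -> Prop) n :
  (forall a J J', (J <= J')%nat -> P a J -> P a J') ->
  (forall a, (a < n)%nat -> exists J, P a J) -> exists J, forall a, (a < n)%nat -> P a J.
Proof.
  intros Hmono. induction n as [|n IH]; intro H.
  - exists 0%nat. intros; lia.
  - destruct IH as [J1 H1]. intros a Ha; apply H; lia.
    destruct (H n ltac:(lia)) as [J2 H2]. exists (Nat.max J1 J2). intros a Ha.
    destruct (Nat.eq_dec a n) as [->|Hne].
    + apply Hmono with J2; auto; lia.
    + apply Hmono with J1; auto; [lia|]. apply H1; lia.
Qed.

Definition InfP (W : nat -> nat -> nat) (u : list nat) : Prop :=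
  forall J, exists j, (J <= j)%nat /\ prefix (W j) (length u) = u.

Lemma InfP_next N W u : (forall j, word N (W j)) -> InfP W u ->
  exists a, (a < N)%nat /\ InfP W (u ++ a :: nil).
Proof.
  intros HW Hu. apply NNPP. intro Hno.
  assert (Hb : forall a, (a < N)%nat -> exists J, forall j, (J <= j)%nat ->
     prefix (W j) (S (length u)) <> u ++ a :: nil).
  { intros a Ha. apply NNPP. intro Hn. apply Hno. exists a. split; auto.
    intro J. apply NNPP. intro Hn2. apply Hn. exists J. intros j Hj E. apply Hn2.
    exists j. split; auto. rewrite length_app. simpl. rewrite Nat.add_1_r. auto. }
  destruct (max_bound (fun a J => forall j, (J <= j)%nat -> prefix (W j) (S (length u)) <> u ++ a :: nil) N)
    as [J HJ].
  { intros a J J' HJJ' HP j Hj. apply HP. lia. }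
  { exact Hb. }
  destruct (Hu J) as [j [Hj E]].
  apply (HJ (W j (length u)) (HW j _) j Hj). rewrite prefix_S, E. reflexivity.
Qed.

Definition nextl (W : nat -> nat -> nat) (N : nat) (u : list nat) : nat :=
  epsilon (inhabits 0%nat) (fun a => (a < N)%nat /\ InfP W (u ++ a :: nil)).

Fixpoint pre (W : nat -> nat -> nat) N (k : nat) : list nat :=
  match k with O => nil | S k' => pre W N k' ++ nextl W N (pre W N k') :: nil end.

Lemma pre_props N W : (forall j, word N (W j)) -> forall k,
  InfP W (pre W N k) /\ length (pre W N k) = k.
Proof.
  intros HW. induction k as [|k [IH1 IH2]]; simpl.
  - split; auto. intro J. exists J. split; auto.
  - destruct (epsilon_spec (inhabits 0%nat) (fun a => (a < N)%nat /\ InfP W (pre W N k ++ a :: nil))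
      (InfP_next N W _ HW IH1)) as [_ H]. split. exact H.
    rewrite length_app, IH2. simpl. lia.
Qed.

Definition omg (W : nat -> nat -> nat) N (i : nat) : nat := nextl W N (pre W N i).

Lemma omg_prefix N W : (forall j, word N (W j)) -> forall k, prefix (omg W N) k = pre W N k.
Proof.
  intros HW. induction k; simpl. reflexivity. rewrite prefix_S, IHk. reflexivity.
Qed.

Lemma omg_word N W : (forall j, word N (W j)) -> word N (omg W N).
Proof.
  intros HW i. unfold omg, nextl.
  destruct (epsilon_spec (inhabits 0%nat) (fun a => (a < N)%nat /\ InfP W (pre W N i ++ a :: nil))
      (InfP_next N W _ HW (proj1 (pre_props N W HW i)))) as [H _]. exact H.
Qed.

Lemma part4b X d N f A pi th : is_metric X d -> word N th ->
  attractor X d N f A -> coordinate_map X d N f A pi ->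
  full X d f A th -> reversible X d N A pi th.
Proof.
  intros Hm Hth Hat Hc [A' [[_ HA'c] [HA'i Hfull]]].
  set (P := fun j (mn : nat * nat) => (S j <= fst mn)%nat /\ (fst mn < snd mn)%nat /\
        subset X (image_set X (fcomp X f (rev (map th (seq (fst mn) (snd mn - fst mn))))) A) A').
  set (mn := fun j => epsilon (inhabits (0%nat, 0%nat)) (P j)).
  assert (Hmn : forall j, P j (mn j)).
  { intro j. apply epsilon_spec. destruct (Hfull (S j) ltac:(lia)) as [m [n [H1 [H2 H3]]]].
    exists (m, n). unfold P; simpl. auto. }
  set (W := fun j i => th (snd (mn j) - 1 - i)%nat).
  assert (HW : forall j, word N (W j)) by (intros j i; apply Hth).
  set (w := omg W N).
  assert (Hw : word N w) by (apply omg_word; auto).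
  assert (Hinf : forall k, InfP W (prefix w k)).
  { intro k. unfold w. rewrite omg_prefix by auto. apply pre_props; auto. }
  assert (HlenP : forall k, length (prefix w k) = k) by apply length_prefix.
  pose proof Hat as [[[a Ha] _] [HF _]].
  assert (HF' : forall y, Fop X N f A y -> A y) by (intro y; apply HF).
  exists w. split; auto. split.
  - apply HA'i. apply (compact_closed X d A' (pi w) Hm HA'c).
    intros e He. destruct (pi_close X d N f A pi w Hat Hc Hw e He) as [K HK].
    destruct (Hinf K K) as [j [_ Ej]]. rewrite HlenP in Ej.
    destruct (Hmn j) as [Hj1 [Hj2 Hj3]].
    set (r := (snd (mn j) - fst (mn j))%nat).
    set (p := fcomp X f (prefix (W j) (K + r)) a).
    exists p. split.
    + unfold p. replace (K + r)%nat with (r + K)%nat by lia. rewrite prefix_split, fcomp_app.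
      replace (prefix (W j) r) with (rev (map th (seq (fst (mn j)) r))).
      apply Hj3. eexists. split; [|reflexivity].
      apply fcomp_inv with N; auto. apply map_seq_bound; auto.
      rewrite rev_seq_map. apply prefix_ext. intros i Hi. unfold W. f_equal. unfold r. lia.
    + unfold p. rewrite prefix_split, fcomp_app, Ej. apply HK. lia.
      apply fcomp_inv with N; auto. apply map_seq_bound; auto.
  - intros M L HM HL. destruct (Hinf L (M + L)%nat) as [j [Hj Ej]]. rewrite HlenP in Ej.
    destruct (Hmn j) as [Hj1 [Hj2 _]].
    exists (snd (mn j) - L)%nat. split. lia.
    intros i Hi. rewrite (prefix_eq_inv _ _ _ (eq_sym Ej) i Hi). unfold W. f_equal. lia.
Qed.

Lemma address_path X N f (A : X -> Prop) x :
  (forall y, A y -> Fop X N f A y) -> A x ->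
  exists (s : nat -> nat) (pts : nat -> X), word N s /\ (forall k, A (pts k)) /\
    forall k, x = fcomp X f (prefix s k) (pts k).
Proof.
  intros HF Hx.
  set (step := fun y => epsilon (inhabits (0%nat, y))
     (fun q => (fst q < N)%nat /\ A (snd q) /\ y = f (fst q) (snd q))).
  assert (Hstep : forall y, A y -> (fst (step y) < N)%nat /\ A (snd (step y)) /\ y = f (fst (step y)) (snd (step y))).
  { intros y Hy. apply epsilon_spec. destruct (HF y Hy) as [i [Hi [z [Hz E]]]].
    exists (i, z). simpl. auto. }
  set (pts := fix pts k := match k with O => x | S k' => snd (step (pts k')) end).
  assert (HA : forall k, A (pts k)).
  { induction k; simpl; auto. apply Hstep; auto. }
  exists (fun k => fst (step (pts k))), pts. split; [|split; auto].
  - intro k. apply Hstep; auto.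
  - induction k. reflexivity. rewrite prefix_S, fcomp_app. simpl.
    destruct (Hstep _ (HA k)) as [_ [_ E]]. rewrite <- E. exact IHk.
Qed.

Lemma step_lemma N th : word N th -> disjunctive N th -> forall m, (1 <= m)%nat ->
  exists m', (m < m')%nat /\ forall t, (t < m)%nat -> th (m' - m + t)%nat = th t.
Proof.
  intros Hw Hd m Hm. destruct (Hd (prefix th m ++ prefix th m)) as [k Hk].
  { intros a Ha. apply in_app_or in Ha. destruct Ha as [Ha|Ha]; unfold prefix in Ha;
    eapply map_seq_bound; eauto. }
  exists (k + 2 * m)%nat. split. lia. intros t Ht.
  replace (k + 2 * m - m + t)%nat with (k + (m + t))%nat by lia.
  rewrite Hk by (rewrite length_app, !length_prefix; lia).
  rewrite app_nth2 by (rewrite length_prefix; lia). rewrite length_prefix.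
  replace (m + t - m)%nat with t by lia. apply nth_prefix; auto.
Qed.

Lemma sr_construct N th (s : nat -> nat) K : word N th -> disjunctive N th -> word N s ->
  (1 <= K)%nat -> exists w, word N w /\ (forall i, (i < K)%nat -> w i = s i) /\
    forall M, (1 <= M)%nat -> exists m, (M <= m)%nat /\
      forall i, (i < m)%nat -> w i = th (m - 1 - i)%nat.
Proof.
  intros Hw Hd Hs HK.
  destruct (Hd (map (fun i => s (K - 1 - i)%nat) (seq 0 K))) as [k Hk].
  { intros a Ha. apply in_map_iff in Ha. destruct Ha as [b [<- _]]. apply Hs. }
  rewrite length_map, length_seq in Hk.
  set (m0 := (k + K)%nat).
  set (g := fun m => epsilon (inhabits 0%nat)
     (fun m' => (m < m')%nat /\ forall t, (t < m)%nat -> th (m' - m + t)%nat = th t)).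
  assert (Hg : forall m, (1 <= m)%nat -> (m < g m)%nat /\ forall t, (t < m)%nat -> th (g m - m + t)%nat = th t).
  { intros m Hm. apply epsilon_spec. apply (step_lemma N); auto. }
  set (ms := fix ms j := match j with O => m0 | S j' => g (ms j') end).
  assert (Hms : forall j, (S j <= ms j)%nat /\ (ms j < ms (S j))%nat /\
     forall t, (t < ms j)%nat -> th (ms (S j) - ms j + t)%nat = th t).
  { induction j.
    - simpl. assert (1 <= m0)%nat by (unfold m0; lia). destruct (Hg m0 H). split; auto.
    - destruct IHj as [H1 [H2 _]]. assert (H3 : (S (S j) <= ms (S j))%nat) by lia.
      split; auto. simpl (ms (S (S j))). apply Hg. lia. }
  assert (Hmono : forall j j', (j <= j')%nat -> (ms j <= ms j')%nat).
  { intros j j' H. induction H. lia. destruct (Hms m) as [_ [H' _]]. lia. }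
  assert (Hsuf : forall j j', (j <= j')%nat -> forall t, (t < ms j)%nat -> th (ms j' - ms j + t)%nat = th t).
  { intros j j' Hjj'. induction Hjj'; intros t Ht.
    - f_equal. lia.
    - destruct (Hms m) as [_ [H2 H3]].
      assert (Hle : (ms j <= ms m)%nat) by (apply Hmono; auto).
      rewrite <- (IHHjj' t Ht). rewrite <- (H3 (ms m - ms j + t)%nat) by lia. f_equal. lia. }
  exists (fun i => th (ms i - 1 - i)%nat).
  assert (Key : forall j i, (i < ms j)%nat -> th (ms i - 1 - i)%nat = th (ms j - 1 - i)%nat).
  { intros j i Hi. destruct (Nat.le_ge_cases i j) as [Hij|Hij].
    - destruct (Hms i) as [Hi1 _]. rewrite <- (Hsuf i j Hij (ms i - 1 - i)%nat) by lia.
      f_equal. pose proof (Hmono _ _ Hij). lia.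
    - rewrite <- (Hsuf j i Hij (ms j - 1 - i)%nat) by lia. f_equal.
      pose proof (Hmono _ _ Hij). lia. }
  split; [intro i; apply Hw|split].
  - intros i Hi. rewrite (Key 0%nat i) by (simpl; unfold m0; lia). simpl.
    unfold m0. replace (k + K - 1 - i)%nat with (k + (K - 1 - i))%nat by lia.
    rewrite Hk by lia.
    rewrite (nth_indep _ _ (s (K - 1 - 0)%nat)) by (rewrite length_map, length_seq; lia).
    rewrite (map_nth (fun i0 => s (K - 1 - i0)%nat)), seq_nth by lia. f_equal. lia.
  - intros M HM. exists (ms M). destruct (Hms M) as [H1 _]. split. lia.
    intros i Hi. apply Key; auto.
Qed.

Lemma part2 X d N f A pi : is_metric X d -> attractor X d N f A -> coordinate_map X d N f A pi ->
  nonempty_set X (interior_set X d A) ->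
  forall th, word N th -> disjunctive N th -> strongly_reversible X d N A pi th.
Proof.
  intros Hm Hat Hc [x [U [HUo [HUA HUx]]]] th Hth Hd.
  pose proof Hm as [Hpos [Hz [Hsym Htri]]].
  destruct (HUo x HUx) as [e [He Hball]].
  pose proof Hat as [[[a Ha] _] [HF _]].
  destruct (address_path X N f A x (fun y => proj2 (HF y)) (HUA x HUx)) as [s [pts [Hs [Hpts Hx]]]].
  destruct (pi_close X d N f A pi s Hat Hc Hs (e/4) ltac:(lra)) as [K0 HK0].
  set (K := Nat.max K0 1).
  destruct (sr_construct N th s K Hth Hd Hs ltac:(unfold K; lia)) as [w [Hw [HwK Hsr]]].
  exists w. split; auto. split; auto.
  exists U. split; auto. split; auto. apply Hball.
  destruct (pi_close X d N f A pi w Hat Hc Hw (e/2) ltac:(lra)) as [K1 HK1].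
  set (y := fcomp X f (map w (seq K K1)) a).
  assert (Hy : A y) by (apply fcomp_inv with N; [intro; apply HF | apply map_seq_bound; auto | auto]).
  assert (H1 := HK1 (K + K1)%nat ltac:(lia) a Ha).
  rewrite prefix_split, fcomp_app in H1. fold y in H1.
  rewrite (prefix_ext w s K HwK) in H1.
  assert (H2 := HK0 K ltac:(unfold K; lia) y Hy).
  assert (H3 := HK0 K ltac:(unfold K; lia) (pts K) (Hpts K)). rewrite <- Hx in H3.
  set (p := fcomp X f (prefix s K) y). fold p in H1, H2.
  pose proof (Htri x (pi s) (pi w)). pose proof (Htri (pi s) p (pi w)).
  rewrite (Hsym (pi s) p) in H0. lra.
Qed.

Theorem mainTheorem1 (X : Type) (d : X -> X -> R) (N : nat) (f : nat -> X -> X)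
  (A : X -> Prop) (pi : (nat -> nat) -> X) :
  is_metric X d -> complete_metric X d -> IFS_ok X d N f ->
  attractor X d N f A -> point_fibred X d N f A -> coordinate_map X d N f A pi ->
  ((2 <= N)%nat -> forall l : list (nat -> nat),
      exists th, word N th /\ disjunctive N th /\ ~ In th l) /\
  (nonempty_set X (interior_set X d A) ->
      forall th, word N th -> disjunctive N th -> strongly_reversible X d N A pi th) /\
  (forall th, word N th -> strongly_reversible X d N A pi th -> reversible X d N A pi th) /\
  (forall th, word N th -> (reversible X d N A pi th <-> full X d f A th)).
Proof.
  intros Hm _ Hifs Hat _ Hc. split; [|split; [|split]].
  - apply part1.
  - apply (part2 X d N f A pi); auto.
  - intros th _. apply part3.
  - intros th Hth. split.
    + apply (part4a X d N f A pi th); auto.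
    + apply (part4b X d N f A pi th); auto.
Qed.
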